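(* Let $K>0$, $D>0$, $\sigma>0$, $r\in\mathbf{R}$, $0<\tau<T$, and let $N$ denote the standard normal cumulative distribution function. For $u>0$ define the pre-dividend option value \[ V(u,\tau)=\begin{cases}(u-D)N(d(u))-Ke^{-r(T-\tau)}N\!\left(d(u)-\sigma\sqrt{T-\tau}\right), & u>D,\\ 0,& u\le D,\end{cases} \qquad d(u)=\frac{\log(u-D)-\log K+\left(r+\frac12\sigma^2\right)(T-\tau)}{\sigma\sqrt{T-\tau}}, \] and, for $u>D$, its derivative \[ V'(u,\tau)=N(d(u))+\frac{e^{-\frac12 d(u)^2}}{\sigma\sqrt{2\pi(T-\tau)}}-\frac{Ke^{-r(T-\tau)}e^{-\frac12\left(d(u)-\sigma\sqrt{T-\tau}\right)^2}}{\sigma\sqrt{2\pi(T-\tau)}\,(u-D)}. \] For $S>0$ let \[ V(S,0)=\frac{e^{-r\tau}}{\sigma\sqrt{2\pi\tau}}\int_{-\infty}^{\infty}V(e^{y},\tau)\exp\!\left[-\frac{(x-y)^2}{2\sigma^2\tau}\right]dy,\qquad x=\log S+\left(r-\frac{\sigma^2}{2}\right)\tau, \] which is the time-$0$ solution of the Black-Scholes equation $\frac{\partial V}{\partial t}+\frac12\sigma^2S^2\frac{\partial^2V}{\partial S^2}+rS\frac{\partial V}{\partial S}-rV=0$ with terminal condition $V(S,T)=\max\{0,S-K\}$, for a stock paying dividend $D$ at time $\tau$ (the option value being continuous across the dividend date while the stock price drops by $D$). Let $S^*>D$ be fixed and let $M\ge1$ be an integer. Set, for $i=0,\dots,M$,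 \[ S_i=D+\frac{S^*-D}{M}\,i,\qquad d_i=\frac{\log S-\log S_i+\left(r+\frac12\sigma^2\right)\tau}{\sigma\sqrt\tau},\qquad d^*=\frac{\log S-\log S^*+\left(r+\frac12\sigma^2\right)\tau}{\sigma\sqrt\tau}, \] and, for $i=1,\dots,M$, let $S_{i+\frac12}=\frac{S_{i-1}+S_i}{2}$ denote the midpoint of $[S_{i-1},S_i]$, \[ \alpha_i=\frac{M}{S^*-D}\left[V(S_i,\tau)-V(S_{i-1},\tau)\right],\quad A_i=N(d_{i-1})-N(d_i),\quad B_i=N(d_{i-1}-\sigma\sqrt\tau)-N(d_i-\sigma\sqrt\tau). \] Then $V^-_{S^*,M}(S,0)\le V(S,0)\le V^+_{S^*,M}(S,0)$, where \[ V^+_{S^*,M}(S,0)=\sum_{i=1}^M\left\{\alpha_iA_iS+e^{-r\tau}\left[V(S_{i-1},\tau)-\alpha_iS_{i-1}\right]B_i\right\}+SN(d^* )+e^{-r\tau}\left[V(S^*,\tau)-S^*\right]N(d^*-\sigma\sqrt\tau), \] \[ V^-_{S^*,M}(S,0)=S\sum_{i=1}^M V'\!\left(S_{i+\frac12},\tau\right)A_i+e^{-r\tau}\sum_{i=1}^M\left[V\!\left(S_{i+\frac12},\tau\right)-V'\!\left(S_{i+\frac12},\tau\right)S_{i+\frac12}\right]B_i+SN(d^* )-e^{-r\tau}\left(D+Ke^{-r(T-\tau)}\right)N(d^*-\sigma\sqrt\tau). \]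
   Context: Black-Scholes economy: the stock price follows a geometric Brownian motion with volatility $\sigma$ on $[0,\tau)$ and on $[\tau,T]$, jumping down by the known dividend $D$ at the known time $\tau$; $r$ is the constant risk-free rate; the European call has strike $K$ and maturity $T$. $V(u,\tau)$ is the option value at time $\tau$ just before the dividend as a function of the pre-dividend stock price $u$. The paper describes $S_{i+\frac12}$ as ''the middle point of each interval $[S_{i-1},S_i]$''. *)

(* Defs.v *)
From Stdlib Require Import Reals Lra.
From Coquelicot Require Import Coquelicot.
Open Scope R_scope.

Definition npdf (t : R) : R := exp (- t ^ 2 / 2) / sqrt (2 * PI).
Definition Ncdf (x : R) : R :=
  RInt_gen npdf (Rbar_locally m_infty) (at_point x).

Definition dfun (K D sigma r tau T u : R) : R :=
  (ln (u - D) - ln K + (r + sigma ^ 2 / 2) * (T - tau)) / (sigma * sqrt (T - tau)).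

Definition Vtau (K D sigma r tau T u : R) : R :=
  if Rlt_dec D u then
    (u - D) * Ncdf (dfun K D sigma r tau T u)
    - K * exp (- r * (T - tau)) * Ncdf (dfun K D sigma r tau T u - sigma * sqrt (T - tau))
  else 0.

Definition Vtau' (K D sigma r tau T u : R) : R :=
  let d := dfun K D sigma r tau T u in
  Ncdf d
  + exp (- d ^ 2 / 2) / (sigma * sqrt (2 * PI * (T - tau)))
  - K * exp (- r * (T - tau)) * exp (- (d - sigma * sqrt (T - tau)) ^ 2 / 2)
      / (sigma * sqrt (2 * PI * (T - tau)) * (u - D)).

Definition V0 (K D sigma r tau T S : R) : R :=
  let x := ln S + (r - sigma ^ 2 / 2) * tau in
  exp (- r * tau) / (sigma * sqrt (2 * PI * tau)) *
  RInt_gen (fun y => Vtau K D sigma r tau T (exp y) * exp (- (x - y) ^ 2 / (2 * sigma ^ 2 * tau)))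
    (Rbar_locally m_infty) (Rbar_locally p_infty).

Definition Sgrid (D Sstar : R) (M i : nat) : R := D + (Sstar - D) / INR M * INR i.

Definition Smid (D Sstar : R) (M i : nat) : R :=
  (Sgrid D Sstar M (i - 1) + Sgrid D Sstar M i) / 2.

Definition dgen (sigma r tau S X : R) : R :=
  (ln S - ln X + (r + sigma ^ 2 / 2) * tau) / (sigma * sqrt tau).

Definition d_i (D sigma r tau Sstar S : R) (M i : nat) : R :=
  dgen sigma r tau S (Sgrid D Sstar M i).

Definition alpha_i (K D sigma r tau T Sstar : R) (M i : nat) : R :=
  INR M / (Sstar - D) *
  (Vtau K D sigma r tau T (Sgrid D Sstar M i) - Vtau K D sigma r tau T (Sgrid D Sstar M (i - 1))).

Definition A_i (D sigma r tau Sstar S : R) (M i : nat) : R :=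
  Ncdf (d_i D sigma r tau Sstar S M (i - 1)) - Ncdf (d_i D sigma r tau Sstar S M i).

Definition B_i (D sigma r tau Sstar S : R) (M i : nat) : R :=
  Ncdf (d_i D sigma r tau Sstar S M (i - 1) - sigma * sqrt tau)
  - Ncdf (d_i D sigma r tau Sstar S M i - sigma * sqrt tau).

Definition Vplus (K D sigma r tau T Sstar S : R) (M : nat) : R :=
  let dstar := dgen sigma r tau S Sstar in
  sum_n_m (fun i =>
     alpha_i K D sigma r tau T Sstar M i * A_i D sigma r tau Sstar S M i * S
     + exp (- r * tau) *
       (Vtau K D sigma r tau T (Sgrid D Sstar M (i - 1))
        - alpha_i K D sigma r tau T Sstar M i * Sgrid D Sstar M (i - 1))
       * B_i D sigma r tau Sstar S M i) 1 M
  + S * Ncdf dstar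
  + exp (- r * tau) * (Vtau K D sigma r tau T Sstar - Sstar) * Ncdf (dstar - sigma * sqrt tau).

Definition Vminus (K D sigma r tau T Sstar S : R) (M : nat) : R :=
  let dstar := dgen sigma r tau S Sstar in
  S * sum_n_m (fun i =>
     Vtau' K D sigma r tau T (Smid D Sstar M i) * A_i D sigma r tau Sstar S M i) 1 M
  + exp (- r * tau) * sum_n_m (fun i =>
     (Vtau K D sigma r tau T (Smid D Sstar M i)
      - Vtau' K D sigma r tau T (Smid D Sstar M i) * Smid D Sstar M i)
     * B_i D sigma r tau Sstar S M i) 1 M
  + S * Ncdf dstar
  - exp (- r * tau) * (D + K * exp (- r * (T - tau))) * Ncdf (dstar - sigma * sqrt tau).

(* Main.v *)
Require Import Defs.
From Stdlib Require Import Reals Lra Lia.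
From Coquelicot Require Import Coquelicot.
Open Scope R_scope.

Lemma gen_p_of_lim (f : R -> R) (L l : R) :
  (forall b, ex_RInt f L b) ->
  filterlim (fun b => RInt f L b) (Rbar_locally p_infty) (locally l) ->
  is_RInt_gen f (at_point L) (Rbar_locally p_infty) l.
Proof.
intros Hex Hl P HP.
unfold filtermapi.
apply Filter_prod with (Q := fun a => a = L) (R := fun b => P (RInt f L b)).
- reflexivity.
- apply Hl. exact HP.
- intros a b -> Hb. exists (RInt f L b). split. exact (RInt_correct f L b (Hex b)). exact Hb.
Qed.

Lemma gen_m_of_lim (f : R -> R) (L l : R) :
  (forall a, ex_RInt f a L) ->
  filterlim (fun a => RInt f a L) (Rbar_locally m_infty) (locally l) ->
  is_RInt_gen f (Rbar_locally m_infty) (at_point L) l.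
Proof.
intros Hex Hl P HP.
unfold filtermapi.
apply Filter_prod with (Q := fun a => P (RInt f a L)) (R := fun b => b = L).
- apply Hl. exact HP.
- reflexivity.
- intros a b Ha ->. exists (RInt f a L). split. exact (RInt_correct f a L (Hex a)). exact Ha.
Qed.

Lemma lim_of_gen_p (f : R -> R) (L l : R) :
  (forall b, ex_RInt f L b) ->
  is_RInt_gen f (at_point L) (Rbar_locally p_infty) l ->
  filterlim (fun b => RInt f L b) (Rbar_locally p_infty) (locally l).
Proof.
intros Hex Hl P HP.
specialize (Hl P HP). destruct Hl as [Q R HQ HR H].
unfold filtermap. eapply filter_imp; [|exact HR].
intros b Hb. destruct (H L b HQ Hb) as [y [Hy Py]].
simpl in Hy. rewrite (is_RInt_unique _ _ _ _ Hy). exact Py.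
Qed.

Lemma cauchy_p (H : R -> R) :
  (forall eps : posreal, exists B, forall b b', B <= b -> B <= b' -> Rabs (H b - H b') < eps) ->
  exists l, filterlim H (Rbar_locally p_infty) (locally l).
Proof.
intros HC. apply (proj1 (filterlim_locally_cauchy (U := R_CompleteSpace) (F := Rbar_locally p_infty) H)).
intros eps. destruct (HC eps) as [B HB].
exists (fun b => B <= b). split.
- exists B. intros; lra.
- intros u v Hu Hv. change (Rabs (H v - H u) < eps). apply HB; auto.
Qed.

Lemma lim_eps_p (H : R -> R) l :
  filterlim H (Rbar_locally p_infty) (locally l) ->
  forall eps : posreal, exists B, forall b, B <= b -> Rabs (H b - l) < eps.
Proof.
intros Hl eps.
assert (Hb := Hl (ball l eps) (locally_ball l eps)).
destruct Hb as [M HM]. exists (M+1). intros b Hb.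
apply (HM b). lra.
Qed.

Lemma lim_eps_m (H : R -> R) l :
  filterlim H (Rbar_locally m_infty) (locally l) ->
  forall eps : posreal, exists B, forall b, b <= B -> Rabs (H b - l) < eps.
Proof.
intros Hl eps.
assert (Hb := Hl (ball l eps) (locally_ball l eps)).
destruct Hb as [M HM]. exists (M-1). intros b Hb.
apply (HM b). lra.
Qed.

Lemma dom_p (f g : R -> R) (L lg : R) :
  (forall b, ex_RInt f L b) -> (forall b, ex_RInt g L b) ->
  (forall x, L <= x -> Rabs (f x) <= g x) ->
  is_RInt_gen g (at_point L) (Rbar_locally p_infty) lg ->
  exists lf, is_RInt_gen f (at_point L) (Rbar_locally p_infty) lf.
Proof.
intros Hf Hg Hfg Hlg.
assert (Lg := lim_of_gen_p g L lg Hg Hlg).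
assert (Hc : exists l, filterlim (fun b => RInt f L b) (Rbar_locally p_infty) (locally l)).
{ apply cauchy_p. intros eps.
  assert (He : 0 < eps/2) by (destruct eps; simpl; lra).
  destruct (lim_eps_p _ _ Lg (mkposreal _ He)) as [B HB]. simpl in HB.
  exists (Rmax B L). intros b b' Hb Hb'.
  assert (HB1 := HB b (Rle_trans _ _ _ (Rmax_l _ _) Hb)).
  assert (HB2 := HB b' (Rle_trans _ _ _ (Rmax_l _ _) Hb')).
  assert (Hbb : forall b b', Rmax B L <= b -> b <= b' ->
     Rabs (RInt f L b - RInt f L b') <= Rabs (RInt g L b - RInt g L b')).
  { intros c c' Hc Hcc.
    assert (E1: RInt f L c' = RInt f L c + RInt f c c').
    { symmetry. apply (RInt_Chasles f L c c'); auto.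
      apply ex_RInt_Chasles with L; auto. apply ex_RInt_swap; auto. }
    assert (E2: RInt g L c' = RInt g L c + RInt g c c').
    { symmetry. apply (RInt_Chasles g L c c'); auto.
      apply ex_RInt_Chasles with L; auto. apply ex_RInt_swap; auto. }
    rewrite E1, E2.
    replace (RInt f L c - (RInt f L c + RInt f c c')) with (- RInt f c c') by ring.
    replace (RInt g L c - (RInt g L c + RInt g c c')) with (- RInt g c c') by ring.
    rewrite !Rabs_Ropp.
    assert (exf : ex_RInt f c c') by (apply ex_RInt_Chasles with L; auto; apply ex_RInt_swap; auto).
    assert (exg : ex_RInt g c c') by (apply ex_RInt_Chasles with L; auto; apply ex_RInt_swap; auto).
    assert (H1 := norm_RInt_le f g c c' (RInt f c c') (RInt g c c') Hcc).
    assert (H2 : norm (RInt f c c') <= RInt g c c').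
    { apply H1. intros x Hx. apply Hfg. assert (L <= c) by (eapply Rle_trans; [apply Rmax_r|exact Hc]). lra.
      exact (RInt_correct f c c' exf). exact (RInt_correct g c c' exg). }
    change (Rabs (RInt f c c') <= RInt g c c') in H2.
    eapply Rle_trans; [exact H2|apply Rle_abs]. }
  destruct (Rle_lt_dec b b') as [Hle|Hlt].
  - eapply Rle_lt_trans. apply Hbb; auto.
    replace (RInt g L b - RInt g L b') with ((RInt g L b - lg) - (RInt g L b' - lg)) by ring.
    eapply Rle_lt_trans. apply Rabs_triang. rewrite Rabs_Ropp.
    destruct eps; simpl in *; lra.
  - rewrite Rabs_minus_sym. eapply Rle_lt_trans. apply Hbb; auto. lra.
    replace (RInt g L b' - RInt g L b) with ((RInt g L b' - lg) - (RInt g L b - lg)) by ring.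
    eapply Rle_lt_trans. apply Rabs_triang. rewrite Rabs_Ropp.
    destruct eps; simpl in *; lra. }
destruct Hc as [l Hl]. exists l. apply gen_p_of_lim; auto.
Qed.

Lemma gen_zero (Fa Fb : (R -> Prop) -> Prop) {FFa : Filter Fa} {FFb : Filter Fb} :
  is_RInt_gen (fun _ => 0) Fa Fb 0.
Proof.
intros P HP. unfold filtermapi.
apply filter_forall. intros [a b]. exists 0. split.
- assert (H := is_RInt_const (V:=R_NormedModule) a b 0). simpl. assert (E : @scal R_Ring (NormedModule.ModuleSpace R_AbsRing R_NormedModule) (b - a) 0 = 0).
  { simpl. unfold scal; simpl. unfold mult; simpl. ring. }
  rewrite E in H. exact H.
- apply locally_singleton. exact HP.
Qed.

Lemma gen_le_p (f g : R -> R) (L lf lg : R) :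
  is_RInt_gen f (at_point L) (Rbar_locally p_infty) lf ->
  is_RInt_gen g (at_point L) (Rbar_locally p_infty) lg ->
  (forall x, L <= x -> f x <= g x) -> lf <= lg.
Proof.
intros Hf Hg Hfg.
assert (Hm := is_RInt_gen_minus g f lg lf Hg Hf).
assert (H0 := gen_zero (at_point L) (Rbar_locally p_infty)).
assert (Hn := RInt_gen_norm (Fa := at_point L) (Fb := Rbar_locally p_infty) (fun _ => 0) (fun y => minus (g y) (f y)) 0 (minus lg lf)).
cut (norm (V := R_NormedModule) 0 <= minus lg lf).
{ unfold minus, plus, opp, norm; simpl. unfold abs; simpl. rewrite Rabs_R0. lra. }
apply Hn; auto.
- apply Filter_prod with (Q := fun a => a = L) (R := fun b => L < b).
  reflexivity. exists L; auto. intros a b -> Hb; simpl; lra.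
- apply Filter_prod with (Q := fun a => a = L) (R := fun b => True).
  reflexivity. exists L; auto. intros a b -> _ x Hx. simpl in Hx.
  unfold minus, plus, opp, norm; simpl. unfold abs; simpl. rewrite Rabs_R0. assert (Hq := Hfg x (proj1 Hx)). lra.
Qed.

Lemma filterlim_at_point (f : R -> R) (a : R) :
  filterlim f (at_point a) (locally (f a)).
Proof.
intros P HP. unfold filtermap, at_point. apply locally_singleton. exact HP.
Qed.

Lemma exp_le_mono x y : x <= y -> exp x <= exp y.
Proof. intros [H|H]. left; apply exp_increasing; auto. subst; lra. Qed.

Lemma RC (f : R -> R) a b : ex_RInt f a b -> is_RInt f a b (RInt f a b).
Proof. intros H. exact (RInt_correct f a b H). Qed.

Lemma scalR (a b : R) : scal a b = a * b.
Proof. reflexivity. Qed.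

Lemma exd_cont (f : R -> R) x : ex_derive f x -> continuous f x.
Proof. intros H. exact (ex_derive_continuous (K:=R_AbsRing) (V:=R_NormedModule) f x H). Qed.

Lemma exRC (f : R -> R) a b : (forall z, Rmin a b <= z <= Rmax a b -> continuous f z) -> ex_RInt f a b.
Proof. intros H. exact (ex_RInt_continuous (V:=R_CompleteNormedModule) f a b H). Qed.

Lemma RInt_extR (f g : R -> R) a b : (forall x, Rmin a b < x < Rmax a b -> f x = g x) -> RInt f a b = RInt g a b.
Proof. intros H. exact (RInt_ext (V:=R_CompleteNormedModule) f g a b H). Qed.

Lemma cont_gauss t : continuous (fun t => exp (-(t^2))) t.
Proof. apply exd_cont. auto_derive. auto. Qed.

Definition gI x := RInt (fun t => exp (-(t^2))) 0 x.
Definition gf (u t : R) := exp (-(u^2 * (1 + t^2))) / (1 + t^2).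
Definition gJ x := RInt (fun t => gf x t) 0 1.

Lemma ex_gauss a b : ex_RInt (fun t => exp (-(t^2))) a b.
Proof. apply exRC. intros; apply cont_gauss. Qed.

Lemma gI_deriv x : is_derive gI x (exp (-(x^2))).
Proof.
apply (is_derive_RInt (fun t => exp (-(t^2))) gI 0 x).
- apply filter_forall. intros b. apply RC. apply ex_gauss.
- apply cont_gauss.
Qed.

Lemma opt_pos t : 0 < 1 + t^2.
Proof. nra. Qed.

Lemma gf_deriv u t : is_derive (fun z => gf z t) u (-2 * u * exp (-(u^2 * (1 + t^2)))).
Proof.
unfold gf. assert (H := opt_pos t). auto_derive. lra.
replace (- (u * (u * 1) * (1 + t * (t * 1)))) with (-(u^2*(1+t^2))) by ring. field. lra.
Qed.

Lemma gf_cont u t : continuous (fun t => gf u t) t.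
Proof. unfold gf. apply exd_cont. assert (H := opt_pos t). auto_derive. lra. Qed.

Lemma gJ_deriv x : is_derive gJ x (RInt (fun t => -2 * x * exp (-(x^2 * (1 + t^2)))) 0 1).
Proof.
unfold gJ.
assert (E : RInt (fun t => -2 * x * exp (-(x^2 * (1 + t^2)))) 0 1 =
            RInt (fun t => Derive (fun u => gf u t) x) 0 1).
{ apply RInt_extR. intros t _. symmetry. apply is_derive_unique. apply gf_deriv. }
rewrite E.
apply (is_derive_RInt_param gf 0 1 x).
- apply filter_forall. intros y t _. eexists. apply gf_deriv.
- intros t _.
  apply continuity_2d_pt_ext with (f := fun u v => -2 * u * exp (-(u^2 * (1 + v^2)))).
  { intros u v. symmetry. apply is_derive_unique. apply gf_deriv. }
  apply continuity_2d_pt_mult.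
  + apply continuity_2d_pt_mult. apply continuity_2d_pt_const. apply continuity_2d_pt_id1.
  + apply continuity_1d_2d_pt_comp with (f := exp) (g := fun u v => -(u^2 * (1 + v^2))).
    * apply continuity_pt_filterlim. apply exd_cont. auto_derive. auto.
    * apply continuity_2d_pt_opp.
      apply continuity_2d_pt_mult.
      { apply continuity_2d_pt_ext with (f := fun u v => u * (u * 1)).
        intros; simpl; ring.
        apply continuity_2d_pt_mult. apply continuity_2d_pt_id1.
        apply continuity_2d_pt_mult. apply continuity_2d_pt_id1. apply continuity_2d_pt_const. }
      apply continuity_2d_pt_plus. apply continuity_2d_pt_const.
      { apply continuity_2d_pt_ext with (f := fun u v => v * (v * 1)).
        intros; simpl; ring.
        apply continuity_2d_pt_mult. apply continuity_2d_pt_id2.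
        apply continuity_2d_pt_mult. apply continuity_2d_pt_id2. apply continuity_2d_pt_const. }
- apply filter_forall. intros y. apply exRC. intros; apply gf_cont.
Qed.

Lemma gJ_key x : RInt (fun t => -2 * x * exp (-(x^2 * (1 + t^2)))) 0 1 = -2 * exp (-(x^2)) * gI x.
Proof.
assert (H1 : is_RInt (fun t => scal x (exp (-((x * t + 0)^2)))) 0 1 (gI x)).
{ apply (is_RInt_comp_lin (fun t => exp (-(t^2))) x 0 0 1).
  replace (x * 0 + 0) with 0 by ring. replace (x * 1 + 0) with x by ring.
  apply RC. apply ex_gauss. }
assert (H2 := is_RInt_scal _ _ _ (-2 * exp (-(x^2))) _ H1).
apply is_RInt_unique.
eapply is_RInt_ext; [|exact H2].
intros t _. unfold scal; simpl; unfold mult; simpl.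
replace (-(x*(x*1)*(1+t*(t*1)))) with (-(x*(x*1)) + -((x*t+0)*((x*t+0)*1))) by ring.
rewrite exp_plus. ring.
Qed.

Definition gh x := gI x ^ 2 + gJ x.

Lemma gh_deriv x : is_derive gh x 0.
Proof.
unfold gh.
replace 0 with (INR 2 * exp (-(x^2)) * gI x ^ Init.Nat.pred 2 + RInt (fun t => -2 * x * exp (-(x^2 * (1 + t^2)))) 0 1).
apply (is_derive_plus (fun x => gI x ^ 2) gJ).
apply (is_derive_pow gI 2 x). apply gI_deriv.
apply gJ_deriv.
rewrite gJ_key. simpl. ring.
Qed.

Lemma gh_const x : gh x = gh 0.
Proof.
assert (H := is_RInt_derive gh (fun _ => 0) 0 x).
assert (H1 : is_RInt (fun _ => 0) 0 x (minus (gh x) (gh 0))).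
{ apply H. intros; apply gh_deriv. intros; apply continuous_const. }
assert (H2 := is_RInt_const (V:=R_NormedModule) 0 x 0).
assert (E : @scal R_Ring (NormedModule.ModuleSpace R_AbsRing R_NormedModule) (x - 0) 0 = 0).
{ simpl. unfold scal; simpl. unfold mult; simpl. ring. }
rewrite E in H2.
assert (U1 := is_RInt_unique _ _ _ _ H1). assert (U2 := is_RInt_unique _ _ _ _ H2).
rewrite U1 in U2. unfold minus, plus, opp in U2; simpl in U2. lra.
Qed.

Lemma gh0 : gh 0 = PI / 4.
Proof.
unfold gh, gI, gJ. rewrite RInt_point. simpl.
assert (E : RInt (fun t => gf 0 t) 0 1 = RInt (fun t => / (1 + t^2)) 0 1).
{ apply RInt_extR. intros t _. unfold gf. replace (-(0^2 * (1 + t^2))) with 0 by ring.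
  rewrite exp_0. field. assert (H := opt_pos t). lra. }
rewrite E.
assert (H : is_RInt (fun t => / (1 + t^2)) 0 1 (minus (atan 1) (atan 0))).
{ apply (is_RInt_derive atan). intros. apply is_derive_Reals. apply derivable_pt_lim_atan.
  intros. apply exd_cont. assert (H0 := opt_pos x). auto_derive. lra. }
rewrite (is_RInt_unique _ _ _ _ H). rewrite atan_1, atan_0.
unfold minus, plus, opp, zero; simpl. ring.
Qed.

Lemma gJ_bounds x : 0 <= gJ x <= exp (-(x^2)).
Proof.
assert (Hex : ex_RInt (fun t => gf x t) 0 1).
{ apply exRC. intros; apply gf_cont. }
split.
- apply RInt_ge_0. lra. exact Hex. intros t _. unfold gf.
  assert (H := opt_pos t). assert (H' := exp_pos (-(x^2 * (1 + t^2)))).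
  apply Rlt_le. apply Rdiv_lt_0_compat; lra.
- unfold gJ. eapply Rle_trans.
  apply (RInt_le _ (fun _ => exp (-(x^2))) 0 1). lra. exact Hex.
  apply ex_RInt_const.
  intros t _. unfold gf. assert (H := opt_pos t).
  assert (H1 : exp (-(x^2 * (1 + t^2))) <= exp (-(x^2))).
  { apply exp_le_mono. assert (0 <= x^2 * t^2) by (apply Rmult_le_pos; nra). nra. }
  assert (H2 := exp_pos (-(x^2 * (1 + t^2)))).
  apply Rle_trans with (exp (-(x^2 * (1 + t^2)))).
  { unfold Rdiv. rewrite <- (Rmult_1_r (exp _)) at 2. apply Rmult_le_compat_l. lra.
    rewrite <- Rinv_1. apply Rinv_le_contravar. lra. assert (0 <= t^2) by nra. lra. }
  exact H1.
  rewrite RInt_const. rewrite scalR. lra.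
Qed.

Lemma gI_nonneg x : 0 <= x -> 0 <= gI x.
Proof.
intros Hx. apply RInt_ge_0. auto. apply ex_gauss. intros; apply Rlt_le, exp_pos.
Qed.

Lemma gI_lim : forall eps, 0 < eps -> exists X, forall x, X <= x -> Rabs (gI x - sqrt PI / 2) < eps.
Proof.
intros eps Heps.
assert (HPI := PI_RGT_0).
set (c := sqrt PI / 2).
assert (Hc : 0 < c) by (unfold c; assert (0 < sqrt PI) by (apply sqrt_lt_R0; lra); lra).
assert (Hcc : c * c = PI / 4).
{ unfold c. replace (sqrt PI / 2 * (sqrt PI / 2)) with (sqrt PI * sqrt PI / 4) by field.
  rewrite sqrt_sqrt; lra. }
exists (Rmax 1 (- ln (eps * c)) + 1).
intros x Hx.
assert (Hx1 : 1 <= x) by (assert (H:= Rmax_l 1 (- ln (eps * c))); lra).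
assert (Hx2 : - ln (eps * c) < x) by (assert (H:= Rmax_r 1 (- ln (eps * c))); lra).
assert (Hg := gh_const x). rewrite gh0 in Hg. unfold gh in Hg.
assert (HJ := gJ_bounds x).
assert (HI := gI_nonneg x ltac:(lra)).
assert (Hexp : exp (-(x^2)) < eps * c).
{ rewrite <- (exp_ln (eps * c)) by (apply Rmult_lt_0_compat; lra).
  apply exp_increasing. nra. }
assert (Hd : gI x - c = - gJ x / (gI x + c)).
{ field_simplify_eq. replace (gI x ^ 2) with (PI/4 - gJ x) by lra. rewrite <- Hcc. ring. lra. }
rewrite Hd. unfold Rdiv. rewrite Rabs_mult, Rabs_Ropp, Rabs_right by lra.
rewrite Rabs_right. 2: { apply Rle_ge, Rlt_le, Rinv_0_lt_compat. lra. }
apply Rle_lt_trans with (gJ x * / c).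
{ apply Rmult_le_compat_l. lra. apply Rinv_le_contravar; lra. }
apply Rmult_lt_reg_r with c. lra. rewrite Rmult_assoc, Rinv_l by lra. lra.
Qed.

Lemma uniqR (f : R -> R) a b l : is_RInt f a b l -> RInt f a b = l.
Proof. intros H. exact (is_RInt_unique (V:=R_CompleteNormedModule) f a b l H). Qed.

Lemma scalR2 (a b : R) : @scal R_Ring (NormedModule.ModuleSpace R_AbsRing R_NormedModule) a b = a * b.
Proof. reflexivity. Qed.

Ltac toR := match goal with |- ?a = ?b => change (@eq R a b) end.

Lemma s2PI : sqrt (2 * PI) = sqrt 2 * sqrt PI.
Proof. apply sqrt_mult; [lra| left; apply PI_RGT_0]. Qed.

Lemma sPI_pos : 0 < sqrt PI.
Proof. apply sqrt_lt_R0, PI_RGT_0. Qed.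
Lemma s2_pos : 0 < sqrt 2.
Proof. apply sqrt_lt_R0; lra. Qed.

Lemma npdf_cont t : continuous npdf t.
Proof. unfold npdf. apply exd_cont. auto_derive. auto. Qed.

Lemma ex_npdf a b : ex_RInt npdf a b.
Proof. apply exRC. intros; apply npdf_cont. Qed.

Lemma npdf_pos t : 0 < npdf t.
Proof. unfold npdf. apply Rdiv_lt_0_compat. apply exp_pos. rewrite s2PI.
  apply Rmult_lt_0_compat. apply s2_pos. apply sPI_pos. Qed.

Definition G z := RInt npdf 0 z.

Lemma G_odd z : G (- z) = - G z.
Proof.
assert (H1 : is_RInt (fun y => scal (-1) (npdf (-1 * y + 0))) 0 z (G (-z))).
{ apply (is_RInt_comp_lin npdf (-1) 0 0 z).
  replace (-1 * 0 + 0) with 0 by ring. replace (-1 * z + 0) with (-z) by ring.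
  apply RC, ex_npdf. }
assert (H2 := is_RInt_scal _ _ _ (-1) _ (RC npdf 0 z (ex_npdf 0 z))).
assert (H3 : is_RInt (fun y => scal (-1) (npdf (-1 * y + 0))) 0 z (scal (-1) (G z))).
{ eapply is_RInt_ext; [|exact H2]. intros x _. unfold npdf.
  replace ((-1 * x + 0)^2) with (x^2) by ring. reflexivity. }
apply uniqR in H1. apply uniqR in H3.
rewrite H1 in H3. rewrite H3. unfold scal; simpl; unfold mult; simpl. ring.
Qed.

Lemma G_gauss b : G b = gI (b / sqrt 2) / sqrt PI.
Proof.
assert (Hs := s2_pos). assert (Hp := sPI_pos).
assert (H1 : is_RInt (fun y => scal (sqrt 2) (npdf (sqrt 2 * y + 0))) 0 (b / sqrt 2) (G b)).
{ apply (is_RInt_comp_lin npdf (sqrt 2) 0 0 (b / sqrt 2)).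
  replace (sqrt 2 * 0 + 0) with 0 by ring. replace (sqrt 2 * (b / sqrt 2) + 0) with b by (field; lra).
  apply RC, ex_npdf. }
assert (H2 := is_RInt_scal _ _ _ (/ sqrt PI) _ (RC _ 0 (b / sqrt 2) (ex_gauss 0 (b / sqrt 2)))).
assert (H3 : is_RInt (fun y => scal (sqrt 2) (npdf (sqrt 2 * y + 0))) 0 (b / sqrt 2) (scal (/ sqrt PI) (gI (b / sqrt 2)))).
{ eapply is_RInt_ext; [|exact H2]. intros x _. toR. rewrite !scalR2. unfold npdf.
  replace (- (sqrt 2 * x + 0) ^ 2 / 2) with (- x ^ 2).
  rewrite s2PI. field. lra.
  replace ((sqrt 2 * x + 0)^2) with ((sqrt 2 * sqrt 2) * x^2) by ring. rewrite sqrt_sqrt by lra. field. }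
apply uniqR in H1. apply uniqR in H3.
rewrite H1 in H3. rewrite H3. unfold scal; simpl; unfold mult; simpl. unfold Rdiv. ring.
Qed.

Lemma G_lim eps : 0 < eps -> exists X, forall b, X <= b -> Rabs (G b - 1/2) < eps.
Proof.
intros He. assert (Hs := s2_pos). assert (Hp := sPI_pos).
destruct (gI_lim (eps * sqrt PI)) as [X HX]. apply Rmult_lt_0_compat; lra.
exists (sqrt 2 * X). intros b Hb.
assert (Hb' : X <= b / sqrt 2).
{ apply Rmult_le_reg_l with (sqrt 2). lra. replace (sqrt 2 * (b / sqrt 2)) with b by (field; lra). lra. }
specialize (HX _ Hb').
rewrite G_gauss.
replace (gI (b / sqrt 2) / sqrt PI - 1 / 2) with ((gI (b / sqrt 2) - sqrt PI / 2) / sqrt PI) by (field; lra).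
unfold Rdiv. rewrite Rabs_mult. rewrite (Rabs_right (/ sqrt PI)).
2: { apply Rle_ge, Rlt_le, Rinv_0_lt_compat; lra. }
apply Rmult_lt_reg_r with (sqrt PI). lra. rewrite Rmult_assoc, Rinv_l by lra. lra.
Qed.

Lemma G_mono a b : a <= b -> G a <= G b.
Proof.
intros Hab. unfold G.
rewrite <- (RInt_Chasles npdf 0 a b) by apply ex_npdf.
assert (0 <= RInt npdf a b).
{ apply RInt_ge_0; auto. apply ex_npdf. intros; left; apply npdf_pos. }
change (plus (RInt npdf 0 a) (RInt npdf a b)) with (RInt npdf 0 a + RInt npdf a b). lra.
Qed.

Lemma lim_m_of_eps (H : R -> R) l :
  (forall eps, 0 < eps -> exists X, forall a, a <= X -> Rabs (H a - l) < eps) ->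
  filterlim H (Rbar_locally m_infty) (locally l).
Proof.
intros HE P [eps Heps]. destruct (HE eps (cond_pos eps)) as [X HX].
exists X. intros a Ha. apply Heps. apply HX. lra.
Qed.

Lemma lim_p_of_eps (H : R -> R) l :
  (forall eps, 0 < eps -> exists X, forall a, X <= a -> Rabs (H a - l) < eps) ->
  filterlim H (Rbar_locally p_infty) (locally l).
Proof.
intros HE P [eps Heps]. destruct (HE eps (cond_pos eps)) as [X HX].
exists X. intros a Ha. apply Heps. apply HX. lra.
Qed.

Lemma Ncdf_eq z : Ncdf z = 1/2 + G z.
Proof.
assert (H0 : is_RInt_gen npdf (Rbar_locally m_infty) (at_point 0) (1/2)).
{ apply gen_m_of_lim. intros; apply ex_npdf.
  apply lim_m_of_eps. intros eps He. destruct (G_lim eps He) as [X HX].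
  exists (- X). intros a Ha.
  assert (E : RInt npdf a 0 = G (- a)).
  { rewrite G_odd. unfold G. rewrite <- (opp_RInt_swap npdf) by apply ex_npdf. reflexivity. }
  rewrite E. apply HX. lra. }
assert (H1 : is_RInt_gen npdf (at_point 0) (at_point z) (G z)).
{ apply is_RInt_gen_at_point. apply RC, ex_npdf. }
assert (H2 := is_RInt_gen_Chasles npdf 0 _ _ H0 H1).
unfold Ncdf. rewrite (is_RInt_gen_unique _ _ H2). reflexivity.
Qed.

Lemma G_deriv z : is_derive G z (npdf z).
Proof.
apply (is_derive_RInt npdf G 0 z).
- apply filter_forall. intros b. apply RC, ex_npdf.
- apply npdf_cont.
Qed.

Lemma Ncdf_deriv z : is_derive Ncdf z (npdf z).
Proof.
apply (is_derive_ext (fun z => 1/2 + G z)). intros; rewrite Ncdf_eq; reflexivity.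
assert (H := is_derive_plus (fun _ => 1/2) G z zero (npdf z) (is_derive_const _ _) (G_deriv z)).
unfold plus, zero in H; simpl in H. rewrite Rplus_0_l in H. exact H.
Qed.

Lemma Ncdf_cont z : continuous Ncdf z.
Proof. apply exd_cont. eexists. apply Ncdf_deriv. Qed.

Lemma G_le z : G z <= 1/2.
Proof.
apply le_epsilon. intros eps He.
destruct (G_lim eps He) as [X HX].
assert (H1 := HX (Rmax X z) (Rmax_l _ _)).
assert (H2 := G_mono z (Rmax X z) (Rmax_r _ _)).
apply Rabs_def2 in H1. lra.
Qed.

Lemma Ncdf_bounds z : 0 <= Ncdf z <= 1.
Proof.
rewrite Ncdf_eq. assert (H1 := G_le z). assert (H2 := G_le (- z)). rewrite G_odd in H2. lra.
Qed.

Lemma Ncdf_mono a b : a <= b -> Ncdf a <= Ncdf b.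
Proof. intros H. rewrite !Ncdf_eq. assert (H1 := G_mono a b H). lra. Qed.

Lemma Ncdf_lim_m eps : 0 < eps -> exists Z, forall z, z <= Z -> Ncdf z < eps.
Proof.
intros He. destruct (G_lim eps He) as [X HX]. exists (- X). intros z Hz.
rewrite Ncdf_eq. assert (H := HX (- z) ltac:(lra)). rewrite G_odd in H.
apply Rabs_def2 in H. lra.
Qed.

Lemma Ncdf_lim_p eps : 0 < eps -> exists Z, forall z, Z <= z -> 1 - eps < Ncdf z.
Proof.
intros He. destruct (G_lim eps He) as [X HX]. exists X. intros z Hz.
rewrite Ncdf_eq. assert (H := HX z Hz). apply Rabs_def2 in H. lra.
Qed.

Lemma Ncdf_filterlim_m : filterlim Ncdf (Rbar_locally m_infty) (locally 0).
Proof.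
apply lim_m_of_eps. intros eps He. destruct (Ncdf_lim_m eps He) as [Z HZ].
exists Z. intros a Ha. assert (H := HZ a Ha). assert (H' := Ncdf_bounds a).
rewrite Rminus_0_r, Rabs_right by lra. lra.
Qed.

Definition Kp K r tau T := K * exp (- r * (T - tau)).
Definition wv sigma tau T := sigma * sqrt (T - tau).
Definition phi K D sigma r tau T v t :=
  (v - D) * Ncdf t - Kp K r tau T * Ncdf (t - wv sigma tau T).

Lemma Kp_pos K r tau T : 0 < K -> 0 < Kp K r tau T.
Proof. intros; unfold Kp; apply Rmult_lt_0_compat; auto; apply exp_pos. Qed.

Lemma wv_pos sigma tau T : 0 < sigma -> tau < T -> 0 < wv sigma tau T.
Proof. intros; unfold wv; apply Rmult_lt_0_compat; auto; apply sqrt_lt_R0; lra. Qed.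

Lemma Vtau_gt K D sigma r tau T v : D < v ->
  Vtau K D sigma r tau T v = phi K D sigma r tau T v (dfun K D sigma r tau T v).
Proof. intros H. unfold Vtau, phi, Kp, wv. destruct (Rlt_dec D v); [reflexivity|lra]. Qed.

Lemma Vtau_le K D sigma r tau T v : v <= D -> Vtau K D sigma r tau T v = 0.
Proof. intros H. unfold Vtau. destruct (Rlt_dec D v); [lra|reflexivity]. Qed.

Lemma key_id K D sigma r tau T v t : 0 < K -> 0 < sigma -> tau < T -> D < v ->
  Kp K r tau T * npdf (t - wv sigma tau T) =
  (v - D) * npdf t * exp (wv sigma tau T * (t - dfun K D sigma r tau T v)).
Proof.
intros HK Hs HT Hv.
assert (Hq : 0 < sqrt (T - tau)) by (apply sqrt_lt_R0; lra).
assert (Hw : wv sigma tau T * dfun K D sigma r tau T v =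
             ln (v - D) - ln K + (r + sigma^2/2) * (T - tau)).
{ unfold wv, dfun. field. split; lra. }
assert (Hw2 : wv sigma tau T ^ 2 = sigma^2 * (T - tau)).
{ unfold wv. replace ((sigma * sqrt (T - tau))^2) with (sigma^2 * (sqrt (T - tau) * sqrt (T - tau))) by ring.
  rewrite sqrt_sqrt; lra. }
set (w := wv sigma tau T) in *. set (d := dfun K D sigma r tau T v) in *.
unfold Kp, npdf.
rewrite <- (exp_ln K) at 1 by lra. rewrite <- (exp_ln (v - D)) at 1 by lra.
assert (E : ln K + - r * (T - tau) + - (t - w)^2/2 = ln (v - D) + - t^2/2 + w * (t - d)).
{ replace ((t - w)^2) with (t^2 - 2*t*w + w^2) by ring. rewrite Hw2.
  replace (w * (t - d)) with (w * t - w * d) by ring. rewrite Hw. field. }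
replace (exp (ln K) * exp (- r * (T - tau)) * (exp (- (t - w) ^ 2 / 2) / sqrt (2 * PI)))
  with (exp (ln K + - r * (T - tau) + - (t - w)^2/2) / sqrt (2 * PI)).
2: { rewrite !exp_plus. replace (- (t - w) ^ 2 / 2) with (- (t - w)^2/2) by reflexivity. field.
     rewrite s2PI. apply Rgt_not_eq. apply Rmult_lt_0_compat; [apply s2_pos|apply sPI_pos]. }
rewrite E. rewrite !exp_plus. field.
rewrite s2PI. apply Rgt_not_eq. apply Rmult_lt_0_compat; [apply s2_pos|apply sPI_pos].
Qed.

Lemma phi_deriv K D sigma r tau T v t :
  is_derive (phi K D sigma r tau T v) t
    ((v - D) * npdf t - Kp K r tau T * npdf (t - wv sigma tau T)).
Proof.
unfold phi.
assert (H1 := Ncdf_deriv t). assert (H2 := Ncdf_deriv (t - wv sigma tau T)).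
auto_derive.
- split. eexists; exact H1. split. eexists; exact H2. auto.
- replace (Derive (fun x : R => Ncdf x) t) with (npdf t).
  replace (Derive (fun x : R => Ncdf x) (t + - wv sigma tau T)) with (npdf (t - wv sigma tau T)).
  ring. symmetry. apply is_derive_unique. exact H2. symmetry. apply is_derive_unique. exact H1.
Qed.

Lemma phi_max K D sigma r tau T v t : 0 < K -> 0 < sigma -> tau < T -> D < v ->
  phi K D sigma r tau T v t <= phi K D sigma r tau T v (dfun K D sigma r tau T v).
Proof.
intros HK Hs HT Hv.
set (d := dfun K D sigma r tau T v).
assert (Hwp := wv_pos sigma tau T Hs HT).
assert (Hder : forall c, (v - D) * npdf c - Kp K r tau T * npdf (c - wv sigma tau T)
   = (v - D) * npdf c * (1 - exp (wv sigma tau T * (c - d)))).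
{ intros c. rewrite (key_id K D sigma r tau T v c); auto. fold d. ring. }
destruct (MVT_gen (phi K D sigma r tau T v) t d
   (fun c => (v - D) * npdf c - Kp K r tau T * npdf (c - wv sigma tau T))) as [c [Hc Hmvt]].
- intros; apply phi_deriv.
- intros. apply continuity_pt_filterlim. apply exd_cont. eexists. apply phi_deriv.
- rewrite Hder in Hmvt.
  assert (Hn := npdf_pos c).
  destruct (Rle_lt_dec t d) as [Htd|Htd].
  + rewrite Rmin_left in Hc by lra. rewrite Rmax_right in Hc by lra.
    assert (exp (wv sigma tau T * (c - d)) <= 1).
    { rewrite <- exp_0. apply exp_le_mono. assert (0 <= wv sigma tau T * (d - c)) by (apply Rmult_le_pos; lra). nra. }
    assert (0 <= (v - D) * npdf c * (1 - exp (wv sigma tau T * (c - d))) * (d - t)).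
    { apply Rmult_le_pos; [|lra]. apply Rmult_le_pos; [|lra]. apply Rmult_le_pos; lra. }
    lra.
  + rewrite Rmin_right in Hc by lra. rewrite Rmax_left in Hc by lra.
    assert (1 <= exp (wv sigma tau T * (c - d))).
    { rewrite <- exp_0. apply exp_le_mono. assert (0 <= wv sigma tau T * (c - d)) by (apply Rmult_le_pos; lra). nra. }
    assert (0 <= (v - D) * npdf c * (exp (wv sigma tau T * (c - d)) - 1) * (t - d)).
    { apply Rmult_le_pos; [|lra]. apply Rmult_le_pos; [|lra]. apply Rmult_le_pos; lra. }
    lra.
Qed.

Lemma TAN K D sigma r tau T v t : 0 < K -> 0 < sigma -> tau < T ->
  phi K D sigma r tau T v t <= Vtau K D sigma r tau T v.
Proof.
intros HK Hs HT.
destruct (Rlt_le_dec D v) as [Hv|Hv].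
- rewrite Vtau_gt by auto. apply phi_max; auto.
- rewrite Vtau_le by auto. unfold phi.
  assert (H1 := Ncdf_bounds t). assert (H2 := Ncdf_bounds (t - wv sigma tau T)).
  assert (H3 := Kp_pos K r tau T HK).
  assert (0 <= (D - v) * Ncdf t) by (apply Rmult_le_pos; lra).
  assert (0 <= Kp K r tau T * Ncdf (t - wv sigma tau T)) by (apply Rmult_le_pos; lra).
  nra.
Qed.

Lemma Vtau_nonneg K D sigma r tau T v : 0 < K -> 0 < sigma -> tau < T ->
  0 <= Vtau K D sigma r tau T v.
Proof.
intros HK Hs HT.
destruct (Rlt_le_dec D v) as [Hv|Hv]; [|rewrite Vtau_le by auto; lra].
apply le_epsilon. intros eps He.
assert (H3 := Kp_pos K r tau T HK).
destruct (Ncdf_lim_m (eps / Kp K r tau T)) as [Z HZ].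
{ apply Rdiv_lt_0_compat; lra. }
set (t := Z + wv sigma tau T).
assert (H := TAN K D sigma r tau T v t HK Hs HT). unfold phi in H.
assert (Ht : t - wv sigma tau T <= Z) by (unfold t; lra).
assert (H1 := HZ _ Ht). assert (H2 := Ncdf_bounds t).
assert (Kp K r tau T * Ncdf (t - wv sigma tau T) < eps).
{ apply Rmult_lt_reg_r with (/ Kp K r tau T). apply Rinv_0_lt_compat; lra.
  rewrite Rmult_comm, <- Rmult_assoc, Rinv_l, Rmult_1_l by lra. exact H1. }
assert (0 <= (v - D) * Ncdf t) by (apply Rmult_le_pos; lra).
lra.
Qed.

Lemma Vtau_upper K D sigma r tau T v : 0 < K ->
  Vtau K D sigma r tau T v <= Rmax 0 (v - D).
Proof.
intros HK.
destruct (Rlt_le_dec D v) as [Hv|Hv].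
- unfold Vtau. destruct (Rlt_dec D v); [|lra].
  assert (H1 := Ncdf_bounds (dfun K D sigma r tau T v)).
  assert (H2 := Ncdf_bounds (dfun K D sigma r tau T v - sigma * sqrt (T - tau))).
  assert (H3 := Kp_pos K r tau T HK). unfold Kp in H3.
  assert (0 <= K * exp (- r * (T - tau)) * Ncdf (dfun K D sigma r tau T v - sigma * sqrt (T - tau)))
    by (apply Rmult_le_pos; lra).
  assert ((v - D) * Ncdf (dfun K D sigma r tau T v) <= (v - D)).
  { rewrite <- (Rmult_1_r (v - D)) at 2. apply Rmult_le_compat_l; lra. }
  eapply Rle_trans; [|apply Rmax_r]. lra.
- rewrite Vtau_le by auto. apply Rmax_l.
Qed.

Lemma Vtau_ge K D sigma r tau T v : 0 < K -> 0 < sigma -> tau < T ->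
  v - D - Kp K r tau T <= Vtau K D sigma r tau T v.
Proof.
intros HK Hs HT.
assert (H3 := Kp_pos K r tau T HK).
destruct (Rlt_le_dec D v) as [Hv|Hv]; [|rewrite Vtau_le by auto; lra].
apply le_epsilon. intros eps He.
destruct (Ncdf_lim_p (eps / (v - D))) as [Z HZ].
{ apply Rdiv_lt_0_compat; lra. }
assert (H := TAN K D sigma r tau T v Z HK Hs HT). unfold phi in H.
assert (H1 := HZ Z (Rle_refl _)). assert (H2 := Ncdf_bounds (Z - wv sigma tau T)).
assert ((v - D) * (1 - eps / (v - D)) <= (v - D) * Ncdf Z).
{ apply Rmult_le_compat_l; lra. }
replace ((v - D) * (1 - eps / (v - D))) with (v - D - eps) in H0 by (field; lra).
assert (Kp K r tau T * Ncdf (Z - wv sigma tau T) <= Kp K r tau T).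
{ rewrite <- (Rmult_1_r (Kp K r tau T)) at 2. apply Rmult_le_compat_l; lra. }
lra.
Qed.

Lemma Vtau_tail_up K D sigma r tau T Ss u : 0 < K -> 0 < sigma -> tau < T ->
  D < Ss -> Ss <= u ->
  Vtau K D sigma r tau T u - u <= Vtau K D sigma r tau T Ss - Ss.
Proof.
intros HK Hs HT HS Hu.
assert (H := TAN K D sigma r tau T Ss (dfun K D sigma r tau T u) HK Hs HT).
rewrite (Vtau_gt K D sigma r tau T u) by lra.
unfold phi in *.
assert (H1 := Ncdf_bounds (dfun K D sigma r tau T u)).
assert ((Ss - u) <= (Ss - u) * Ncdf (dfun K D sigma r tau T u)).
{ assert (0 <= (u - Ss) * (1 - Ncdf (dfun K D sigma r tau T u))) by (apply Rmult_le_pos; lra). nra. }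
nra.
Qed.

Lemma Vtau_chord K D sigma r tau T a b u : 0 < K -> 0 < sigma -> tau < T ->
  D <= a -> a < b -> a <= u <= b ->
  (b - a) * Vtau K D sigma r tau T u <=
  (b - u) * Vtau K D sigma r tau T a + (u - a) * Vtau K D sigma r tau T b.
Proof.
intros HK Hs HT Ha Hab Hu.
assert (Pa := Vtau_nonneg K D sigma r tau T a HK Hs HT).
assert (Pb := Vtau_nonneg K D sigma r tau T b HK Hs HT).
destruct (Rlt_le_dec D u) as [Hv|Hv].
- set (d := dfun K D sigma r tau T u).
  assert (H1 := TAN K D sigma r tau T a d HK Hs HT).
  assert (H2 := TAN K D sigma r tau T b d HK Hs HT).
  rewrite (Vtau_gt K D sigma r tau T u Hv). fold d.
  assert (E : (b - a) * phi K D sigma r tau T u d =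
     (b - u) * phi K D sigma r tau T a d + (u - a) * phi K D sigma r tau T b d)
    by (unfold phi; ring).
  rewrite E.
  apply Rplus_le_compat; apply Rmult_le_compat_l; lra.
- rewrite (Vtau_le K D sigma r tau T u Hv).
  assert (0 <= (b - u) * Vtau K D sigma r tau T a) by (apply Rmult_le_pos; lra).
  assert (0 <= (u - a) * Vtau K D sigma r tau T b) by (apply Rmult_le_pos; lra).
  lra.
Qed.

Lemma Vtau'_eq K D sigma r tau T m : 0 < K -> 0 < sigma -> tau < T -> D < m ->
  Vtau' K D sigma r tau T m = Ncdf (dfun K D sigma r tau T m).
Proof.
intros HK Hs HT Hm.
assert (Hk := key_id K D sigma r tau T m (dfun K D sigma r tau T m) HK Hs HT Hm).
rewrite Rminus_diag, Rmult_0_r, exp_0, Rmult_1_r in Hk.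
unfold Kp, wv, npdf in Hk.
set (d := dfun K D sigma r tau T m) in *.
assert (Hp : 0 < sqrt (2 * PI)) by (rewrite s2PI; apply Rmult_lt_0_compat; [apply s2_pos|apply sPI_pos]).
assert (Hk' : K * exp (- r * (T - tau)) * exp (- (d - sigma * sqrt (T - tau)) ^ 2 / 2)
              = (m - D) * exp (- d ^ 2 / 2)).
{ replace (K * exp (- r * (T - tau)) * exp (- (d - sigma * sqrt (T - tau)) ^ 2 / 2))
    with ((K * exp (- r * (T - tau)) * (exp (- (d - sigma * sqrt (T - tau)) ^ 2 / 2) / sqrt (2 * PI))) * sqrt (2 * PI)) by (field; lra).
  rewrite Hk. field. lra. }
unfold Vtau'. fold d.
assert (Hq : 0 < sqrt (2 * PI * (T - tau))) by (apply sqrt_lt_R0; assert (H:=PI_RGT_0); nra).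
rewrite Hk'. field. split; lra.
Qed.

Lemma Vtau_tangent K D sigma r tau T m u : 0 < K -> 0 < sigma -> tau < T -> D < m ->
  Vtau' K D sigma r tau T m * u + (Vtau K D sigma r tau T m - Vtau' K D sigma r tau T m * m)
  <= Vtau K D sigma r tau T u.
Proof.
intros HK Hs HT Hm.
rewrite Vtau'_eq by auto. rewrite (Vtau_gt K D sigma r tau T m Hm).
eapply Rle_trans; [|apply (TAN K D sigma r tau T u (dfun K D sigma r tau T m) HK Hs HT)].
unfold phi. lra.
Qed.

Lemma ballR (x e y : R) : ball x e y <-> Rabs (y - x) < e.
Proof. reflexivity. Qed.

Lemma Vtau_cont K D sigma r tau T u : 0 < K -> 0 < sigma -> tau < T ->
  continuous (Vtau K D sigma r tau T) u.
Proof.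
intros HK Hs HT.
destruct (Rlt_le_dec u D) as [Hu|Hu].
- apply (continuous_ext_loc (Vtau K D sigma r tau T) (fun _ => 0)).
  + assert (He : 0 < D - u) by lra. exists (mkposreal _ He). intros y Hy.
    apply ballR in Hy. simpl in Hy. apply Rabs_def2 in Hy. unfold minus, plus, opp in Hy; simpl in Hy.
    symmetry. apply Vtau_le. lra.
  + apply continuous_const.
- destruct Hu as [Hu|Hu].
  + apply (continuous_ext_loc (Vtau K D sigma r tau T) (fun y => (y - D) * Ncdf (dfun K D sigma r tau T y)
        - K * exp (- r * (T - tau)) * Ncdf (dfun K D sigma r tau T y - sigma * sqrt (T - tau)))).
    * assert (He : 0 < u - D) by lra. exists (mkposreal _ He). intros y Hy.
      apply ballR in Hy. simpl in Hy. apply Rabs_def2 in Hy. unfold minus, plus, opp in Hy; simpl in Hy.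
      unfold Vtau. destruct (Rlt_dec D y); [reflexivity|lra].
    * apply exd_cont. unfold dfun. auto_derive.
      repeat split; try lra; eexists; apply Ncdf_deriv.
  + subst u. apply continuity_pt_filterlim.
    intros eps He. exists eps. split; auto. intros x [_ Hx].
    simpl in *. unfold R_dist in *.
    rewrite (Vtau_le K D sigma r tau T D (Rle_refl _)), Rminus_0_r.
    assert (H0 := Vtau_nonneg K D sigma r tau T x HK Hs HT).
    assert (H1 := Vtau_upper K D sigma r tau T x HK).
    rewrite Rabs_right by lra.
    apply Rle_lt_trans with (Rmax 0 (x - D)); auto.
    apply Rmax_lub_lt; auto. apply Rle_lt_trans with (Rabs (x - D)); auto. apply Rle_abs.
Qed.

Definition gk A m s y := A * exp (- (m - y)^2 / (2 * s^2)).
Definition GF A m s y := - (A * s * sqrt (2 * PI)) * Ncdf ((m - y) / s).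

Lemma s2PI_pos : 0 < sqrt (2 * PI).
Proof. rewrite s2PI; apply Rmult_lt_0_compat; [apply s2_pos|apply sPI_pos]. Qed.

Lemma GF_deriv A m s y : 0 < s -> is_derive (GF A m s) y (gk A m s y).
Proof.
intros Hs. unfold GF, gk.
assert (H1 := Ncdf_deriv ((m - y) / s)).
assert (Hp := s2PI_pos).
auto_derive.
- eexists; exact H1.
- replace ((m + - y) * / s) with ((m - y) / s) by (unfold Rdiv; ring).
  replace (Derive (fun x : R => Ncdf x) ((m - y) / s)) with (npdf ((m - y) / s)).
  2: { symmetry. apply is_derive_unique. exact H1. }
  unfold npdf. replace (- ((m - y) / s) ^ 2 / 2) with (- (m - y) ^ 2 / (2 * s ^ 2)) by (field; lra).
  toR. field. lra.
Qed.

Lemma gk_cont A m s y : 0 < s -> continuous (gk A m s) y.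
Proof.
intros Hs. unfold gk. apply exd_cont. auto_derive. auto.
Qed.

Lemma gk_int A m s a b : 0 < s -> is_RInt (gk A m s) a b (GF A m s b - GF A m s a).
Proof.
intros Hs.
apply (is_RInt_derive (GF A m s) (gk A m s) a b).
- intros; apply GF_deriv; auto.
- intros; apply gk_cont; auto.
Qed.

Lemma GF_lim_p A m s : 0 < s -> filterlim (GF A m s) (Rbar_locally p_infty) (locally 0).
Proof.
intros Hs. apply lim_p_of_eps. intros eps He.
set (C := A * s * sqrt (2 * PI)).
assert (HC : 0 <= Rabs C) by apply Rabs_pos.
destruct (Ncdf_lim_m (eps / (Rabs C + 1))) as [Z HZ].
{ apply Rdiv_lt_0_compat; lra. }
exists (m - s * Z). intros y Hy.
assert (Hz : (m - y) / s <= Z).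
{ apply Rmult_le_reg_l with s; auto. replace (s * ((m - y) / s)) with (m - y) by (field; lra). lra. }
assert (H1 := HZ _ Hz). assert (H2 := Ncdf_bounds ((m - y) / s)).
unfold GF. fold C. rewrite Rminus_0_r.
rewrite Rabs_mult, Rabs_Ropp. rewrite (Rabs_right (Ncdf _)) by lra.
apply Rle_lt_trans with (Rabs C * (eps / (Rabs C + 1))).
{ apply Rmult_le_compat_l; lra. }
apply Rlt_le_trans with ((Rabs C + 1) * (eps / (Rabs C + 1))).
{ apply Rmult_lt_compat_r. apply Rdiv_lt_0_compat; lra. lra. }
right. field. lra.
Qed.

Lemma gk_tail A m s a : 0 < s ->
  is_RInt_gen (gk A m s) (at_point a) (Rbar_locally p_infty) (- GF A m s a).
Proof.
intros Hs.
assert (H := is_RInt_gen_Derive (Fa := at_point a) (Fb := Rbar_locally p_infty) (GF A m s) (GF A m s a) 0).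
replace (- GF A m s a) with (0 - GF A m s a) by ring.
apply (is_RInt_gen_ext (Derive (GF A m s))).
- apply filter_forall. intros ab z _. apply is_derive_unique. apply GF_deriv; auto.
- apply H.
  + apply filter_forall. intros ab z _. eexists. apply GF_deriv; auto.
  + apply filter_forall. intros ab z _.
    apply (continuous_ext (gk A m s)).
    intros w. symmetry. apply is_derive_unique. apply GF_deriv; auto.
    apply gk_cont; auto.
  + apply filterlim_at_point.
  + apply GF_lim_p; auto.
Qed.

Definition xx sigma r tau S := ln S + (r - sigma^2/2) * tau.
Definition ss sigma tau := sigma * sqrt tau.
Definition kk sigma r tau S y := exp (- (xx sigma r tau S - y)^2 / (2 * sigma^2 * tau)).
Definition EE sigma r tau S := exp (xx sigma r tau S + ss sigma tau ^ 2 / 2).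
Definition cc sigma r tau := exp (- r * tau) / (sigma * sqrt (2 * PI * tau)).
Definition hh sigma r tau S p q y := (p * exp y + q) * kk sigma r tau S y.

Lemma ss_pos sigma tau : 0 < sigma -> 0 < tau -> 0 < ss sigma tau.
Proof. intros; unfold ss; apply Rmult_lt_0_compat; auto; apply sqrt_lt_R0; auto. Qed.

Lemma ss2 sigma tau : 0 < tau -> ss sigma tau ^ 2 = sigma^2 * tau.
Proof. intros. unfold ss. replace ((sigma * sqrt tau)^2) with (sigma^2 * (sqrt tau * sqrt tau)) by ring.
  rewrite sqrt_sqrt; lra. Qed.

Lemma kk_gk sigma r tau S y : 0 < sigma -> 0 < tau ->
  kk sigma r tau S y = gk 1 (xx sigma r tau S) (ss sigma tau) y.
Proof. intros. unfold kk, gk. rewrite ss2 by auto. rewrite Rmult_1_l. f_equal. field. split; lra. Qed.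

Lemma kk_pos sigma r tau S y : 0 < kk sigma r tau S y.
Proof. apply exp_pos. Qed.

Lemma ekk_gk sigma r tau S y : 0 < sigma -> 0 < tau ->
  exp y * kk sigma r tau S y = gk (EE sigma r tau S) (xx sigma r tau S + ss sigma tau ^ 2) (ss sigma tau) y.
Proof.
intros Hs Ht. assert (H := ss_pos sigma tau Hs Ht).
unfold kk, gk, EE. rewrite <- !exp_plus. f_equal.
rewrite ss2 by auto. set (x := xx sigma r tau S).
assert (0 < sigma^2) by nra.
field. lra.
Qed.

Lemma hh_split sigma r tau S p q y : 0 < sigma -> 0 < tau ->
  hh sigma r tau S p q y =
  gk (p * EE sigma r tau S) (xx sigma r tau S + ss sigma tau ^ 2) (ss sigma tau) y
  + gk q (xx sigma r tau S) (ss sigma tau) y.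
Proof.
intros Hs Ht. unfold hh.
replace ((p * exp y + q) * kk sigma r tau S y) with (p * (exp y * kk sigma r tau S y) + q * kk sigma r tau S y) by ring.
rewrite ekk_gk, kk_gk by auto. unfold gk. ring.
Qed.

Lemma cc_eq sigma r tau : 0 < sigma -> 0 < tau ->
  cc sigma r tau = exp (- r * tau) / (ss sigma tau * sqrt (2 * PI)).
Proof.
intros. unfold cc, ss. rewrite (sqrt_mult (2 * PI) tau). f_equal. ring.
assert (H1 := PI_RGT_0). lra. lra.
Qed.

Lemma EE_eq sigma r tau S : 0 < S -> 0 < tau -> EE sigma r tau S = S * exp (r * tau).
Proof.
intros. unfold EE, xx. rewrite ss2 by auto.
replace (ln S + (r - sigma ^ 2 / 2) * tau + sigma ^ 2 * tau / 2) with (ln S + r * tau) by field.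
rewrite exp_plus, exp_ln; auto.
Qed.

Lemma arg0 sigma r tau S X : 0 < sigma -> 0 < tau ->
  (xx sigma r tau S - ln X) / ss sigma tau = dgen sigma r tau S X - sigma * sqrt tau.
Proof.
intros Hs Ht. assert (Hq0 : 0 < sqrt tau) by (apply sqrt_lt_R0; auto).
unfold xx, dgen, ss. set (q := sqrt tau) in *.
assert (Hq : q * q = tau) by (unfold q; apply sqrt_sqrt; lra).
rewrite <- Hq. field. split; lra.
Qed.

Lemma arg1 sigma r tau S X : 0 < sigma -> 0 < tau ->
  (xx sigma r tau S + ss sigma tau ^ 2 - ln X) / ss sigma tau = dgen sigma r tau S X.
Proof.
intros Hs Ht. assert (Hq0 : 0 < sqrt tau) by (apply sqrt_lt_R0; auto).
unfold xx, dgen, ss. set (q := sqrt tau) in *.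
assert (Hq : q * q = tau) by (unfold q; apply sqrt_sqrt; lra).
rewrite <- Hq. field. split; lra.
Qed.

Lemma hh_int sigma r tau S p q a b : 0 < sigma -> 0 < tau -> 0 < S ->
  is_RInt (hh sigma r tau S p q) (ln a) (ln b)
   ((p * S * (Ncdf (dgen sigma r tau S a) - Ncdf (dgen sigma r tau S b))
     + q * exp (- r * tau) * (Ncdf (dgen sigma r tau S a - sigma * sqrt tau)
                              - Ncdf (dgen sigma r tau S b - sigma * sqrt tau))) / cc sigma r tau).
Proof.
intros Hs Ht HS.
assert (Hss := ss_pos sigma tau Hs Ht).
assert (H1 := gk_int (p * EE sigma r tau S) (xx sigma r tau S + ss sigma tau ^ 2) (ss sigma tau) (ln a) (ln b) Hss).
assert (H2 := gk_int q (xx sigma r tau S) (ss sigma tau) (ln a) (ln b) Hss).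
assert (H3 := is_RInt_plus _ _ _ _ _ _ H1 H2).
eapply is_RInt_ext in H3.
2: { intros y _. symmetry. apply (hh_split sigma r tau S p q y Hs Ht). }
replace ((p * S * (Ncdf (dgen sigma r tau S a) - Ncdf (dgen sigma r tau S b))
     + q * exp (- r * tau) * (Ncdf (dgen sigma r tau S a - sigma * sqrt tau)
                              - Ncdf (dgen sigma r tau S b - sigma * sqrt tau))) / cc sigma r tau)
  with (plus (GF (p * EE sigma r tau S) (xx sigma r tau S + ss sigma tau ^ 2) (ss sigma tau) (ln b)
              - GF (p * EE sigma r tau S) (xx sigma r tau S + ss sigma tau ^ 2) (ss sigma tau) (ln a))
             (GF q (xx sigma r tau S) (ss sigma tau) (ln b) - GF q (xx sigma r tau S) (ss sigma tau) (ln a))).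
exact H3.
unfold plus; simpl. unfold GF. rewrite !arg0, !arg1 by auto.
rewrite cc_eq, EE_eq by auto.
assert (Hp := s2PI_pos). assert (He := exp_pos (r * tau)).
replace (exp (- r * tau)) with (/ exp (r * tau)).
2: { rewrite <- exp_Ropp. f_equal. ring. }
field. repeat split; lra.
Qed.

Lemma hh_tail sigma r tau S p q a : 0 < sigma -> 0 < tau -> 0 < S ->
  is_RInt_gen (hh sigma r tau S p q) (at_point (ln a)) (Rbar_locally p_infty)
   ((p * S * Ncdf (dgen sigma r tau S a)
     + q * exp (- r * tau) * Ncdf (dgen sigma r tau S a - sigma * sqrt tau)) / cc sigma r tau).
Proof.
intros Hs Ht HS.
assert (Hss := ss_pos sigma tau Hs Ht).
assert (H1 := gk_tail (p * EE sigma r tau S) (xx sigma r tau S + ss sigma tau ^ 2) (ss sigma tau) (ln a) Hss).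
assert (H2 := gk_tail q (xx sigma r tau S) (ss sigma tau) (ln a) Hss).
assert (H3 := is_RInt_gen_plus _ _ _ _ H1 H2).
eapply is_RInt_gen_ext in H3.
2: { apply filter_forall. intros ab y _. symmetry. apply (hh_split sigma r tau S p q y Hs Ht). }
replace ((p * S * Ncdf (dgen sigma r tau S a)
     + q * exp (- r * tau) * Ncdf (dgen sigma r tau S a - sigma * sqrt tau)) / cc sigma r tau)
  with (plus (- GF (p * EE sigma r tau S) (xx sigma r tau S + ss sigma tau ^ 2) (ss sigma tau) (ln a))
             (- GF q (xx sigma r tau S) (ss sigma tau) (ln a))).
exact H3.
unfold plus; simpl. unfold GF. rewrite !arg0, !arg1 by auto.
rewrite cc_eq, EE_eq by auto.
assert (Hp := s2PI_pos). assert (He := exp_pos (r * tau)).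
replace (exp (- r * tau)) with (/ exp (r * tau)).
2: { rewrite <- exp_Ropp. f_equal. ring. }
field. repeat split; lra.
Qed.

Lemma sum_le_range (a b : nat -> R) (n m : nat) : (n <= m)%nat ->
  (forall k, (n <= k <= m)%nat -> a k <= b k) -> sum_n_m a n m <= sum_n_m b n m.
Proof.
intros Hnm H.
replace m with (n + (m - n))%nat by lia.
assert (Hd : forall d, (n + d <= m)%nat -> sum_n_m a n (n + d) <= sum_n_m b n (n + d)).
{ induction d as [|d IH]; intros Hd.
  - rewrite Nat.add_0_r, !sum_n_n. apply H. lia.
  - replace (n + S d)%nat with (S (n + d)) by lia.
    rewrite !sum_n_Sm by lia. unfold plus; simpl.
    apply Rplus_le_compat. apply IH; lia. apply H; lia. }
apply Hd. lia.
Qed.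

Lemma chasles_sum (f : R -> R) (L : nat -> R) (m : nat) :
  (forall a b, ex_RInt f a b) -> (1 <= m)%nat ->
  RInt f (L 0%nat) (L m) = sum_n_m (fun i => RInt f (L (i - 1)%nat) (L i)) 1 m.
Proof.
intros Hex Hm. induction m as [|m IH]; [lia|].
destruct (Nat.eq_dec m 0) as [E|E].
- subst. rewrite sum_n_n. reflexivity.
- rewrite sum_n_Sm by lia. rewrite <- IH by lia.
  unfold plus; simpl. rewrite Nat.sub_0_r.
  symmetry. exact (RInt_Chasles (V:=R_CompleteNormedModule) f _ _ _ (Hex _ _) (Hex _ _)).
Qed.

Lemma Sgrid_prop D Ss M i : 0 < D -> D < Ss -> (1 <= M)%nat -> (1 <= i <= M)%nat ->
  D <= Sgrid D Ss M (i - 1) /\ Sgrid D Ss M (i - 1) < Sgrid D Ss M i /\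
  Sgrid D Ss M i - Sgrid D Ss M (i - 1) = (Ss - D) / INR M.
Proof.
intros HD HS HM Hi.
assert (HMp : 0 < INR M) by (apply lt_0_INR; lia).
assert (Hi1 : INR (i - 1) = INR i - 1) by (rewrite minus_INR by lia; simpl; ring).
assert (Hi0 : 0 <= INR (i - 1)) by apply pos_INR.
assert (Hq : 0 < (Ss - D) / INR M) by (apply Rdiv_lt_0_compat; lra).
unfold Sgrid. rewrite Hi1 in *. repeat split.
- assert (0 <= (Ss - D) / INR M * (INR i - 1)) by (apply Rmult_le_pos; lra). lra.
- nra.
- ring.
Qed.

Lemma Sgrid_0 D Ss M : (1 <= M)%nat -> Sgrid D Ss M 0 = D.
Proof. intros. unfold Sgrid. simpl. ring. Qed.

Lemma Sgrid_M D Ss M : (1 <= M)%nat -> Sgrid D Ss M M = Ss.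
Proof. intros. unfold Sgrid. field. apply not_0_INR. lia. Qed.

Definition fV K D sigma r tau T S y := Vtau K D sigma r tau T (exp y) * kk sigma r tau S y.

Lemma V0_eq K D sigma r tau T S :
  V0 K D sigma r tau T S = cc sigma r tau *
    RInt_gen (fV K D sigma r tau T S) (Rbar_locally m_infty) (Rbar_locally p_infty).
Proof. reflexivity. Qed.

Lemma kk_cont sigma r tau S y : 0 < sigma -> 0 < tau -> continuous (kk sigma r tau S) y.
Proof.
intros Hs Ht. apply (continuous_ext (gk 1 (xx sigma r tau S) (ss sigma tau))).
intros z. symmetry. apply kk_gk; auto.
apply gk_cont. apply ss_pos; auto.
Qed.

Lemma fV_cont K D sigma r tau T S y : 0 < K -> 0 < sigma -> 0 < tau -> tau < T ->
  continuous (fV K D sigma r tau T S) y.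
Proof.
intros HK Hs Ht HT. unfold fV.
apply (continuous_mult (fun y => Vtau K D sigma r tau T (exp y)) (kk sigma r tau S)).
- apply (continuous_comp exp (Vtau K D sigma r tau T)).
  apply exd_cont. auto_derive. auto.
  apply Vtau_cont; auto.
- apply kk_cont; auto.
Qed.

Lemma hh_cont sigma r tau S p q y : 0 < sigma -> 0 < tau -> continuous (hh sigma r tau S p q) y.
Proof.
intros Hs Ht. unfold hh.
apply (continuous_mult (fun y => p * exp y + q) (kk sigma r tau S)).
- apply exd_cont. auto_derive. auto.
- apply kk_cont; auto.
Qed.

Lemma ex_fV K D sigma r tau T S a b : 0 < K -> 0 < sigma -> 0 < tau -> tau < T ->
  ex_RInt (fV K D sigma r tau T S) a b.
Proof. intros. apply exRC. intros; apply fV_cont; auto. Qed.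

Lemma ex_hh sigma r tau S p q a b : 0 < sigma -> 0 < tau -> ex_RInt (hh sigma r tau S p q) a b.
Proof. intros. apply exRC. intros; apply hh_cont; auto. Qed.

Lemma fV_left K D sigma r tau T S : 0 < K -> 0 < sigma -> 0 < tau -> tau < T -> 0 < D ->
  is_RInt_gen (fV K D sigma r tau T S) (Rbar_locally m_infty) (at_point (ln D)) 0.
Proof.
intros HK Hs Ht HT HD.
apply gen_m_of_lim. intros; apply ex_fV; auto.
apply lim_m_of_eps. intros eps He. exists (ln D). intros a Ha.
assert (E : RInt (fV K D sigma r tau T S) a (ln D) = RInt (fun _ => 0) a (ln D)).
{ apply RInt_extR. intros x Hx. rewrite Rmin_left, Rmax_right in Hx by lra.
  unfold fV. rewrite Vtau_le. ring.
  rewrite <- (exp_ln D) by lra. left. apply exp_increasing. lra. }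
rewrite E. rewrite RInt_const. rewrite scalR. rewrite Rmult_0_r, Rminus_0_r, Rabs_R0. exact He.
Qed.

Lemma cc_pos sigma r tau : 0 < sigma -> 0 < tau -> 0 < cc sigma r tau.
Proof.
intros. unfold cc. apply Rdiv_lt_0_compat. apply exp_pos.
apply Rmult_lt_0_compat; auto. apply sqrt_lt_R0. assert (H1 := PI_RGT_0). nra.
Qed.

Lemma exp_in a b y : 0 < a -> 0 < b -> ln a < y < ln b -> a < exp y < b.
Proof.
intros Ha Hb [H1 H2]. split.
rewrite <- (exp_ln a) by auto. apply exp_increasing; auto.
rewrite <- (exp_ln b) by auto. apply exp_increasing; auto.
Qed.

Lemma piece_upper K D sigma r tau T Ss S M i :
  0 < K -> 0 < D -> 0 < sigma -> 0 < tau -> tau < T -> D < Ss -> (1 <= M)%nat -> 0 < S ->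
  (1 <= i <= M)%nat ->
  cc sigma r tau * RInt (fV K D sigma r tau T S) (ln (Sgrid D Ss M (i - 1))) (ln (Sgrid D Ss M i))
  <= alpha_i K D sigma r tau T Ss M i * A_i D sigma r tau Ss S M i * S
     + exp (- r * tau) *
       (Vtau K D sigma r tau T (Sgrid D Ss M (i - 1))
        - alpha_i K D sigma r tau T Ss M i * Sgrid D Ss M (i - 1))
       * B_i D sigma r tau Ss S M i.
Proof.
intros HK HD Hs Ht HT HSs HM HS Hi.
destruct (Sgrid_prop D Ss M i HD HSs HM Hi) as [Ha [Hab Hdiff]].
set (a := Sgrid D Ss M (i - 1)) in *. set (b := Sgrid D Ss M i) in *.
set (p := alpha_i K D sigma r tau T Ss M i).
set (q := Vtau K D sigma r tau T a - p * a).
assert (HMp : 0 < INR M) by (apply lt_0_INR; lia).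
assert (Hp : p * (b - a) = Vtau K D sigma r tau T b - Vtau K D sigma r tau T a).
{ unfold p, alpha_i. fold a b. rewrite Hdiff. field. split; lra. }
assert (Hcc := cc_pos sigma r tau Hs Ht).
assert (Hle : RInt (fV K D sigma r tau T S) (ln a) (ln b) <= RInt (hh sigma r tau S p q) (ln a) (ln b)).
{ apply RInt_le.
  - left. apply ln_increasing; lra.
  - apply ex_fV; auto.
  - apply ex_hh; auto.
  - intros y Hy. destruct (exp_in a b y ltac:(lra) ltac:(lra) Hy) as [Hy1 Hy2].
    unfold fV, hh. apply Rmult_le_compat_r. left; apply kk_pos.
    assert (Hc := Vtau_chord K D sigma r tau T a b (exp y) HK Hs HT Ha Hab ltac:(lra)).
    apply Rmult_le_reg_l with (b - a). lra.
    unfold q. replace ((b - a) * (p * exp y + (Vtau K D sigma r tau T a - p * a)))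
      with ((b - a) * Vtau K D sigma r tau T a + (exp y - a) * (p * (b - a))) by ring.
    rewrite Hp. lra. }
rewrite (uniqR _ _ _ _ (hh_int sigma r tau S p q a b Hs Ht HS)) in Hle.
apply Rle_trans with (cc sigma r tau * ((p * S * (Ncdf (dgen sigma r tau S a) - Ncdf (dgen sigma r tau S b)) +
      q * exp (- r * tau) * (Ncdf (dgen sigma r tau S a - sigma * sqrt tau) -
         Ncdf (dgen sigma r tau S b - sigma * sqrt tau))) / cc sigma r tau)).
{ apply Rmult_le_compat_l; lra. }
right. unfold A_i, B_i, d_i. fold a b. unfold q. field. lra.
Qed.

Lemma piece_lower K D sigma r tau T Ss S M i :
  0 < K -> 0 < D -> 0 < sigma -> 0 < tau -> tau < T -> D < Ss -> (1 <= M)%nat -> 0 < S ->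
  (1 <= i <= M)%nat ->
  S * (Vtau' K D sigma r tau T (Smid D Ss M i) * A_i D sigma r tau Ss S M i)
  + exp (- r * tau) * ((Vtau K D sigma r tau T (Smid D Ss M i)
      - Vtau' K D sigma r tau T (Smid D Ss M i) * Smid D Ss M i) * B_i D sigma r tau Ss S M i)
  <= cc sigma r tau * RInt (fV K D sigma r tau T S) (ln (Sgrid D Ss M (i - 1))) (ln (Sgrid D Ss M i)).
Proof.
intros HK HD Hs Ht HT HSs HM HS Hi.
destruct (Sgrid_prop D Ss M i HD HSs HM Hi) as [Ha [Hab Hdiff]].
assert (Hm : D < Smid D Ss M i) by (unfold Smid; lra).
set (a := Sgrid D Ss M (i - 1)) in *. set (b := Sgrid D Ss M i) in *.
set (m := Smid D Ss M i) in *.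
set (p := Vtau' K D sigma r tau T m).
set (q := Vtau K D sigma r tau T m - p * m).
assert (Hcc := cc_pos sigma r tau Hs Ht).
assert (Hle : RInt (hh sigma r tau S p q) (ln a) (ln b) <= RInt (fV K D sigma r tau T S) (ln a) (ln b)).
{ apply RInt_le.
  - left. apply ln_increasing; lra.
  - apply ex_hh; auto.
  - apply ex_fV; auto.
  - intros y Hy.
    unfold fV, hh. apply Rmult_le_compat_r. left; apply kk_pos.
    unfold q, p. apply Vtau_tangent; auto. }
rewrite (uniqR _ _ _ _ (hh_int sigma r tau S p q a b Hs Ht HS)) in Hle.
apply Rle_trans with (cc sigma r tau * ((p * S * (Ncdf (dgen sigma r tau S a) - Ncdf (dgen sigma r tau S b)) +
      q * exp (- r * tau) * (Ncdf (dgen sigma r tau S a - sigma * sqrt tau) -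
         Ncdf (dgen sigma r tau S b - sigma * sqrt tau))) / cc sigma r tau)).
2: { apply Rmult_le_compat_l; lra. }
right. unfold A_i, B_i, d_i. fold a b. unfold q. field. lra.
Qed.

Lemma sum_mult_lR (c : R) (u : nat -> R) n m :
  sum_n_m (fun k => c * u k) n m = c * sum_n_m u n m.
Proof. exact (sum_n_m_mult_l (K:=R_Ring) c u n m). Qed.

Lemma sum_plusR (u v : nat -> R) n m :
  sum_n_m (fun k => u k + v k) n m = sum_n_m u n m + sum_n_m v n m.
Proof. exact (sum_n_m_plus (G:=R_AbelianMonoid) u v n m). Qed.

Lemma tail_bounds K D sigma r tau T Ss S :
  0 < K -> 0 < D -> 0 < sigma -> 0 < tau -> tau < T -> D < Ss -> 0 < S ->
  exists It, is_RInt_gen (fV K D sigma r tau T S) (at_point (ln Ss)) (Rbar_locally p_infty) It /\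
  S * Ncdf (dgen sigma r tau S Ss)
   - exp (- r * tau) * (D + K * exp (- r * (T - tau))) * Ncdf (dgen sigma r tau S Ss - sigma * sqrt tau)
   <= cc sigma r tau * It /\
  cc sigma r tau * It <=
   S * Ncdf (dgen sigma r tau S Ss)
   + exp (- r * tau) * (Vtau K D sigma r tau T Ss - Ss) * Ncdf (dgen sigma r tau S Ss - sigma * sqrt tau).
Proof.
intros HK HD Hs Ht HT HSs HS.
assert (Hcc := cc_pos sigma r tau Hs Ht).
assert (Hdom : forall x, ln Ss <= x -> Rabs (fV K D sigma r tau T S x) <= hh sigma r tau S 1 0 x).
{ intros x _. unfold fV, hh.
  assert (H0 := Vtau_nonneg K D sigma r tau T (exp x) HK Hs HT).
  assert (H1 := Vtau_upper K D sigma r tau T (exp x) HK).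
  assert (H2 := exp_pos x). assert (H3 := kk_pos sigma r tau S x).
  rewrite Rabs_right by (apply Rle_ge, Rmult_le_pos; lra).
  apply Rmult_le_compat_r. lra.
  assert (Rmax 0 (exp x - D) <= exp x) by (apply Rmax_lub; lra). lra. }
destruct (dom_p (fV K D sigma r tau T S) (hh sigma r tau S 1 0) (ln Ss) _
   (fun b => ex_fV K D sigma r tau T S _ _ HK Hs Ht HT)
   (fun b => ex_hh sigma r tau S 1 0 _ _ Hs Ht) Hdom (hh_tail sigma r tau S 1 0 Ss Hs Ht HS)) as [It HIt].
exists It. split; [exact HIt|]. split.
  + assert (H := gen_le_p _ _ _ _ _ (hh_tail sigma r tau S 1 (- (D + K * exp (- r * (T - tau)))) Ss Hs Ht HS) HIt).
    assert (H' : (1 * S * Ncdf (dgen sigma r tau S Ss) +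
       - (D + K * exp (- r * (T - tau))) * exp (- r * tau) *
       Ncdf (dgen sigma r tau S Ss - sigma * sqrt tau)) / cc sigma r tau <= It).
    { apply H. intros y Hy. unfold fV, hh. apply Rmult_le_compat_r. left; apply kk_pos.
      assert (Hg := Vtau_ge K D sigma r tau T (exp y) HK Hs HT). unfold Kp in Hg. lra. }
    apply Rmult_le_compat_l with (r := cc sigma r tau) in H'; [|lra].
    replace (cc sigma r tau * ((1 * S * Ncdf (dgen sigma r tau S Ss) +
       - (D + K * exp (- r * (T - tau))) * exp (- r * tau) *
       Ncdf (dgen sigma r tau S Ss - sigma * sqrt tau)) / cc sigma r tau)) with
      (S * Ncdf (dgen sigma r tau S Ss)
   - exp (- r * tau) * (D + K * exp (- r * (T - tau))) * Ncdf (dgen sigma r tau S Ss - sigma * sqrt tau)) in H'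
      by (field; lra).
    exact H'.
  + assert (H := gen_le_p _ _ _ _ _ HIt (hh_tail sigma r tau S 1 (Vtau K D sigma r tau T Ss - Ss) Ss Hs Ht HS)).
    assert (H' : It <= (1 * S * Ncdf (dgen sigma r tau S Ss) +
       (Vtau K D sigma r tau T Ss - Ss) * exp (- r * tau) *
       Ncdf (dgen sigma r tau S Ss - sigma * sqrt tau)) / cc sigma r tau).
    { apply H. intros y Hy. unfold fV, hh. apply Rmult_le_compat_r. left; apply kk_pos.
      assert (Hy' : Ss <= exp y) by (rewrite <- (exp_ln Ss) by lra; apply exp_le_mono; auto).
      assert (Hg := Vtau_tail_up K D sigma r tau T Ss (exp y) HK Hs HT HSs Hy'). lra. }
    apply Rmult_le_compat_l with (r := cc sigma r tau) in H'; [|lra].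
    replace (cc sigma r tau * ((1 * S * Ncdf (dgen sigma r tau S Ss) +
       (Vtau K D sigma r tau T Ss - Ss) * exp (- r * tau) *
       Ncdf (dgen sigma r tau S Ss - sigma * sqrt tau)) / cc sigma r tau)) with
      (S * Ncdf (dgen sigma r tau S Ss)
   + exp (- r * tau) * (Vtau K D sigma r tau T Ss - Ss) * Ncdf (dgen sigma r tau S Ss - sigma * sqrt tau)) in H'
      by (field; lra).
    exact H'.
Qed.

Theorem theorem1 (K D sigma r tau T Sstar S : R) (M : nat) :
  0 < K -> 0 < D -> 0 < sigma -> 0 < tau -> tau < T ->
  D < Sstar -> (1 <= M)%nat -> 0 < S ->
  Vminus K D sigma r tau T Sstar S M <= V0 K D sigma r tau T S
  /\ V0 K D sigma r tau T S <= Vplus K D sigma r tau T Sstar S M.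
Proof.
intros HK HD Hs Ht HT HSs HM HS.
assert (Hcc := cc_pos sigma r tau Hs Ht).
destruct (tail_bounds K D sigma r tau T Sstar S HK HD Hs Ht HT HSs HS) as [It [HIt [Hl Hu]]].
set (f := fV K D sigma r tau T S).
set (Imid := RInt f (ln D) (ln Sstar)).
assert (H1 : is_RInt_gen f (at_point (ln D)) (at_point (ln Sstar)) Imid).
{ apply is_RInt_gen_at_point. apply RC. apply ex_fV; auto. }
assert (H2 := is_RInt_gen_Chasles f _ _ _ (fV_left K D sigma r tau T S HK Hs Ht HT HD) H1).
assert (H3 := is_RInt_gen_Chasles f _ _ _ H2 HIt).
rewrite V0_eq. fold f. rewrite (is_RInt_gen_unique _ _ H3).
unfold plus; simpl. rewrite Rplus_0_l.
assert (Hsum : Imid = sum_n_m (fun i => RInt f (ln (Sgrid D Sstar M (i - 1))) (ln (Sgrid D Sstar M i))) 1 M).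
{ unfold Imid.
  transitivity (RInt f (ln (Sgrid D Sstar M 0)) (ln (Sgrid D Sstar M M))).
  { rewrite Sgrid_0, Sgrid_M by auto. reflexivity. }
  apply (chasles_sum f (fun i => ln (Sgrid D Sstar M i)) M); auto.
  intros; apply ex_fV; auto. }
rewrite Hsum. rewrite Rmult_plus_distr_l. rewrite <- sum_mult_lR.
split.
- unfold Vminus. cbv zeta.
  rewrite <- !sum_mult_lR. rewrite <- sum_plusR.
  match goal with |- sum_n_m ?a 1 M + _ - _ <= sum_n_m ?b 1 M + _ =>
    assert (Hs1 : sum_n_m a 1 M <= sum_n_m b 1 M) end.
  { apply sum_le_range; auto. intros k Hk. apply piece_lower; auto. }
  lra.
- unfold Vplus. cbv zeta.
  match goal with |- sum_n_m ?b 1 M + _ <= sum_n_m ?a 1 M + _ + _ =>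
    assert (Hs1 : sum_n_m b 1 M <= sum_n_m a 1 M) end.
  { apply sum_le_range; auto. intros k Hk. apply piece_upper; auto. }
  lra.
Qed.
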